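(* Let $D$ be a finite category and let $X:D \to \overline{\mathrm{Pro}}(\mathcal{C})$ be a diagram in the image of $j_D$. Then: \begin{enumerate} \item If $\mathcal{C}$ has finite limits, then the limit of $X$ in $\overline{\mathrm{Pro}}(\mathcal{C})$ can be computed levelwise. \item If $\mathcal{C}$ has finite colimits, then the colimit of $X$ in $\overline{\mathrm{Pro}}(\mathcal{C})$ can be computed levelwise. \end{enumerate}
   Context: $\overline{\mathrm{Pro}}(\mathcal{C})$ has objects diagrams $F:A\to\mathcal{C}$ with $A$ a cofinite directed poset of infinite height (poset as category with $u\to v$ iff $u\ge v$), and morphisms $F^A\to G^B$ the classes $[\alpha,\phi]$ of pairs with $\alpha:B\to A$ strictly increasing and $\phi:F\circ\alpha\to G$ natural, identified along chains of relations $(\alpha',\phi')\ge(\alpha,\phi)$ ($\alpha'\ge\alpha$ pointwise and $\phi'_b=\phi_b\circ F(\alpha'(b)\to\alpha(b))$). The natural functor $j_D:\overline{\mathrm{Pro}}(\mathcal{C}^D)\to\overline{\mathrm{Pro}}(\mathcal{C})^D$ sends $X:A\to\mathcal{C}^D$ (viewed as $A\times D\to\mathcal{C}$) to $d\mapsto X(-,d)$. ''Computed levelwise'' means: if $X=j_D(X')$ with $X':A\to\mathcal{C}^D$, then the limit (resp. colimit) of $X$ is the object $A\to\mathcal{C}$, $a\mapsto\lim_D X'(a)$ (resp. $\operatorname{colim}_D X'(a)$). *)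

(* Defs.v *)
From Stdlib Require Import List Relations.

Record Cat := {
  ob : Type;
  hom : ob -> ob -> Type;
  heq : forall a b, hom a b -> hom a b -> Prop;
  cid : forall a, hom a a;
  cmp : forall a b c, hom b c -> hom a b -> hom a c }.
Arguments hom {_} _ _.
Arguments heq {_ _ _} _ _.
Arguments cid {_} _.
Arguments cmp {_ _ _ _} _ _.

Record IsCat (C : Cat) : Prop := {
  heq_refl : forall (a b : ob C) (f : hom a b), heq f f;
  heq_sym : forall (a b : ob C) (f g : hom a b), heq f g -> heq g f;
  heq_trans : forall (a b : ob C) (f g h : hom a b), heq f g -> heq g h -> heq f h;
  cmp_cong : forall (a b c : ob C) (f f' : hom b c) (g g' : hom a b),
      heq f f' -> heq g g' -> heq (cmp f g) (cmp f' g');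
  cid_l : forall (a b : ob C) (f : hom a b), heq (cmp (cid b) f) f;
  cid_r : forall (a b : ob C) (f : hom a b), heq (cmp f (cid a)) f;
  cmp_assoc : forall (a b c d : ob C) (f : hom c d) (g : hom b c) (h : hom a b),
      heq (cmp f (cmp g h)) (cmp (cmp f g) h) }.

Arguments heq_refl {C} _ {a b} f.
Arguments heq_sym {C} _ {a b f g} _.
Arguments heq_trans {C} _ {a b f g h} _ _.
Arguments cmp_cong {C} _ {a b c f f' g g'} _ _.
Arguments cid_l {C} _ {a b} f.
Arguments cid_r {C} _ {a b} f.
Arguments cmp_assoc {C} _ {a b c d} f g h.

Definition FiniteCat (J : Cat) : Prop :=
  (exists l : list (ob J), forall a, In a l) /\
  (forall a b : ob J, exists l : list (hom a b),
      forall f : hom a b, exists g, In g l /\ heq f g).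

Record Fun (J C : Cat) := {
  fob : ob J -> ob C;
  fmap : forall a b, hom a b -> hom (fob a) (fob b) }.
Arguments fob {_ _} _ _.
Arguments fmap {_ _} _ {_ _} _.

Record IsFun (J C : Cat) (F : Fun J C) : Prop := {
  fmap_cong : forall (a b : ob J) (f g : hom a b), heq f g -> heq (fmap F f) (fmap F g);
  fmap_id : forall a : ob J, heq (fmap F (cid a)) (cid (fob F a));
  fmap_cmp : forall (a b c : ob J) (f : hom b c) (g : hom a b),
      heq (fmap F (cmp f g)) (cmp (fmap F f) (fmap F g)) }.

Arguments IsFun {J C} F.

Definition IsCone (J C : Cat) (F : Fun J C) (c : ob C)
  (p : forall j, hom c (fob F j)) : Prop :=
  forall (j k : ob J) (f : hom j k), heq (cmp (fmap F f) (p j)) (p k).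

Arguments IsCone {J C} F c p.

Definition IsLimit (J C : Cat) (F : Fun J C) (c : ob C)
  (p : forall j, hom c (fob F j)) : Prop :=
  IsCone F c p /\
  forall (c' : ob C) (p' : forall j, hom c' (fob F j)), IsCone F c' p' ->
    exists u : hom c' c,
      (forall j, heq (cmp (p j) u) (p' j)) /\
      (forall u' : hom c' c, (forall j, heq (cmp (p j) u') (p' j)) -> heq u' u).

Arguments IsLimit {J C} F c p.

Definition IsCocone (J C : Cat) (F : Fun J C) (c : ob C)
  (q : forall j, hom (fob F j) c) : Prop :=
  forall (j k : ob J) (f : hom j k), heq (cmp (q k) (fmap F f)) (q j).

Arguments IsCocone {J C} F c q.

Definition IsColimit (J C : Cat) (F : Fun J C) (c : ob C)
  (q : forall j, hom (fob F j) c) : Prop :=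
  IsCocone F c q /\
  forall (c' : ob C) (q' : forall j, hom (fob F j) c'), IsCocone F c' q' ->
    exists u : hom c c',
      (forall j, heq (cmp u (q j)) (q' j)) /\
      (forall u' : hom c c', (forall j, heq (cmp u' (q j)) (q' j)) -> heq u' u).

Arguments IsColimit {J C} F c q.

Definition HasFiniteLimits (C : Cat) : Prop :=
  forall J : Cat, IsCat J -> FiniteCat J -> forall F : Fun J C, IsFun F ->
    exists (c : ob C) (p : forall j, hom c (fob F j)), IsLimit F c p.

Definition HasFiniteColimits (C : Cat) : Prop :=
  forall J : Cat, IsCat J -> FiniteCat J -> forall F : Fun J C, IsFun F ->
    exists (c : ob C) (q : forall j, hom (fob F j) c), IsColimit F c q.

(* [le v u] means v <= u; as a category, there is an arrow u -> v iff u >= v. *)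
Record ProIndex (T : Type) (le : T -> T -> Prop) : Prop := {
  pi_refl : forall u, le u u;
  pi_trans : forall u v w, le u v -> le v w -> le u w;
  pi_antisym : forall u v, le u v -> le v u -> u = v;
  pi_inhabited : exists u : T, True;
  pi_directed : forall u v, exists w, le u w /\ le v w;
  pi_cofinite : forall u, exists l : list T, forall v, le v u -> In v l;
  pi_infheight : forall n : nat, exists f : nat -> T,
      forall i, i < n -> le (f i) (f (S i)) /\ f i <> f (S i) }.

Arguments ProIndex {T} le.

Record ProObj (C : Cat) := {
  pT : Type;
  ple : pT -> pT -> Prop;
  pF : pT -> ob C;
  pFm : forall u v, ple v u -> hom (pF u) (pF v) }.
Arguments pT {_} _.
Arguments ple {_} _ _ _.
Arguments pF {_} _ _.
Arguments pFm {_} _ {_ _} _.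

Definition IsProObj (C : Cat) (P : ProObj C) : Prop :=
  ProIndex (ple P) /\
  (forall u (H : ple P u u), heq (pFm P H) (cid (pF P u))) /\
  (forall u v w (H1 : ple P v u) (H2 : ple P w v) (H3 : ple P w u),
      heq (pFm P H3) (cmp (pFm P H2) (pFm P H1))).

Arguments IsProObj {C} P.

(* Representatives (alpha, phi) of morphisms F -> G: alpha : B -> A strictly
   increasing (stored as: monotone and injective on comparable pairs), and
   phi : F o alpha -> G natural. *)
Record ProHom (C : Cat) (F G : ProObj C) := {
  pal : pT G -> pT F;
  pmono : forall b b', ple G b' b -> ple F (pal b') (pal b);
  pstrict : forall b b', ple G b' b -> b' <> b -> pal b' <> pal b;
  pphi : forall b, hom (pF F (pal b)) (pF G b);
  pnat : forall b b' (H : ple G b' b),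
      heq (cmp (pFm G H) (pphi b)) (cmp (pphi b') (pFm F (pmono b b' H))) }.
Arguments pal {_ _ _} _ _.
Arguments pmono {_ _ _} _ {_ _} _.
Arguments pphi {_ _ _} _ _.
Arguments pstrict {_ _ _} _ {_ _} _ _.
Arguments pnat {_ _ _} _ {_ _} _.

Arguments ProHom {C} F G.

Definition ProGe (C : Cat) (F G : ProObj C) (f' f : ProHom F G) : Prop :=
  (forall b, ple F (pal f b) (pal f' b)) /\
  (forall b (H : ple F (pal f b) (pal f' b)),
      heq (pphi f' b) (cmp (pphi f b) (pFm F H))).

Definition ProEq (C : Cat) (F G : ProObj C) : ProHom F G -> ProHom F G -> Prop :=
  clos_refl_sym_trans _ (@ProGe C F G).

Arguments ProGe {C F G} f' f.
Arguments ProEq {C F G} _ _.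

Section ProBar.
Variables (C : Cat) (HC : IsCat C).

Definition pro_id (F : ProObj C) : ProHom F F.
Proof.
  refine {| pal := fun b => b; pmono := fun b b' H => H;
            pstrict := fun b b' _ ne => ne; pphi := fun b => cid (pF F b) |}.
  intros b b' H. simpl.
  apply (heq_trans HC (cid_r HC _)). apply (heq_sym HC). apply (cid_l HC).
Defined.

Definition pro_cmp (F G H : ProObj C) (g : ProHom G H) (f : ProHom F G) :
  ProHom F H.
Proof.
  refine {| pal := fun b => pal f (pal g b);
            pmono := fun b b' K => pmono f (pmono g K);
            pphi := fun b => cmp (pphi g b) (pphi f (pal g b)) |}.
  - intros b b' K ne. apply (pstrict f). + exact (pmono g K).
    + exact (pstrict g K ne).
  - intros b b' K. simpl.
    apply (heq_trans HC (cmp_assoc HC _ _ _)).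
    apply (heq_trans HC (cmp_cong HC (pnat g K) (heq_refl HC _))).
    apply (heq_trans HC (heq_sym HC (cmp_assoc HC _ _ _))).
    apply (heq_trans HC (cmp_cong HC (heq_refl HC _) (pnat f (pmono g K)))).
    apply (cmp_assoc HC).
Defined.

Definition ProBar : Cat :=
  {| ob := { P : ProObj C | IsProObj P };
     hom := fun X Y => ProHom (proj1_sig X) (proj1_sig Y);
     heq := fun X Y => @ProEq C (proj1_sig X) (proj1_sig Y);
     cid := fun X => pro_id (proj1_sig X);
     cmp := fun X Y Z g f => @pro_cmp (proj1_sig X) (proj1_sig Y) (proj1_sig Z) g f |}.
End ProBar.

(* ---------- Diagrams A -> C^D  (viewed as A x D -> C) ---------- *)
Record ProDiag (C D : Cat) := {
  dT : Type;
  dle : dT -> dT -> Prop;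
  dX : dT -> Fun D C;
  dXa : forall u v, dle v u -> forall d, hom (fob (dX u) d) (fob (dX v) d) }.
Arguments dT {_ _} _.
Arguments dle {_ _} _ _ _.
Arguments dX {_ _} _ _.
Arguments dXa {_ _} _ {_ _} _ _.

Definition IsProDiag (C D : Cat) (X : ProDiag C D) : Prop :=
  ProIndex (dle X) /\
  (forall u, IsFun (dX X u)) /\
  (forall u v (H : dle X v u) d d' (f : hom d d'),
      heq (cmp (fmap (dX X v) f) (dXa X H d)) (cmp (dXa X H d') (fmap (dX X u) f))) /\
  (forall u (H : dle X u u) d, heq (dXa X H d) (cid _)) /\
  (forall u v w (H1 : dle X v u) (H2 : dle X w v) (H3 : dle X w u) d,
      heq (dXa X H3 d) (cmp (dXa X H2 d) (dXa X H1 d))).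

Arguments IsProDiag {C D} X.

Definition jD_obj (C D : Cat) (X : ProDiag C D) (d : ob D) : ProObj C :=
  {| pT := dT X; ple := dle X; pF := fun u => fob (dX X u) d;
     pFm := fun u v H => dXa X H d |}.
Arguments jD_obj {C D} X d.

Lemma jD_obj_ok (C D : Cat) (X : ProDiag C D) (HX : IsProDiag X) (d : ob D) :
  IsProObj (jD_obj X d).
Proof.
  destruct HX as (HA & _ & _ & Hid & Hc). split; [exact HA|]. split.
  - intros u H. exact (Hid u H d).
  - intros u v w H1 H2 H3. exact (Hc u v w H1 H2 H3 d).
Qed.

Definition jD_map (C D : Cat) (HC : IsCat C) (X : ProDiag C D) (HX : IsProDiag X)
  (d d' : ob D) (f : hom d d') : ProHom (jD_obj X d) (jD_obj X d').
Proof.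
  refine (@Build_ProHom C (jD_obj X d) (jD_obj X d') (fun b => b)
            (fun b b' H => H) (fun b b' _ ne => ne)
            (fun u => fmap (dX X u) f) _).
  intros b b' H. simpl. apply (heq_sym HC).
  destruct HX as (_ & _ & Hn & _). exact (Hn b b' H d d' f).
Defined.

Arguments jD_obj_ok {C D X} HX d.
Arguments jD_map {C D} HC {X} HX {d d'} f.

Definition jD (C D : Cat) (HC : IsCat C) (X : ProDiag C D) (HX : IsProDiag X) :
  Fun D (ProBar C HC) :=
  @Build_Fun D (ProBar C HC)
    (fun d => exist _ (jD_obj X d) (jD_obj_ok HX d))
    (fun d d' f => jD_map HC HX f).

Arguments jD {C D} HC {X} HX.

Definition levelObj (C : Cat) (T : Type) (le : T -> T -> Prop) (Lo : T -> ob C)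
  (Lm : forall u v, le v u -> hom (Lo u) (Lo v)) : ProObj C :=
  {| pT := T; ple := le; pF := Lo; pFm := Lm |}.

Arguments levelObj {C T le} Lo Lm.

Definition limLeg (C D : Cat) (X : ProDiag C D) (Lo : dT X -> ob C)
  (Lm : forall u v, dle X v u -> hom (Lo u) (Lo v))
  (pi : forall u d, hom (Lo u) (fob (dX X u) d))
  (Hc : forall u v (H : dle X v u) d,
      heq (cmp (dXa X H d) (pi u d)) (cmp (pi v d) (Lm u v H)))
  (d : ob D) : ProHom (levelObj Lo Lm) (jD_obj X d) :=
  @Build_ProHom C (levelObj Lo Lm) (jD_obj X d) (fun b => b)
    (fun b b' H => H) (fun b b' _ ne => ne) (fun u => pi u d)
    (fun b b' H => Hc b b' H d).

Arguments limLeg {C D X Lo Lm} pi Hc d.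

Definition colimLeg (C D : Cat) (X : ProDiag C D) (Lo : dT X -> ob C)
  (Lm : forall u v, dle X v u -> hom (Lo u) (Lo v))
  (io : forall u d, hom (fob (dX X u) d) (Lo u))
  (Hc : forall u v (H : dle X v u) d,
      heq (cmp (Lm u v H) (io u d)) (cmp (io v d) (dXa X H d)))
  (d : ob D) : ProHom (jD_obj X d) (levelObj Lo Lm) :=
  @Build_ProHom C (jD_obj X d) (levelObj Lo Lm) (fun b => b)
    (fun b b' H => H) (fun b b' _ ne => ne) (fun u => io u d)
    (fun b b' H => Hc b b' H d).
Arguments colimLeg {C D X Lo Lm} io Hc d.

(* Main.v *)
Require Import Defs.
From Stdlib Require Import List Relations.
From Stdlib Require Import Setoid Morphisms Lia Classical ClassicalEpsilon Arith PeanoNat.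

Lemma dchoice (I : Type) (T : I -> Type) (P : forall i, T i -> Prop) :
  (forall i, exists x, P i x) -> exists f : forall i, T i, forall i, P i (f i).
Proof.
  intros H. exists (fun i => proj1_sig (constructive_indefinite_description _ (H i))).
  intros i. exact (proj2_sig (constructive_indefinite_description _ (H i))).
Qed.

Lemma min_nat (P : nat -> Prop) : (exists n, P n) -> exists n, P n /\ forall m, P m -> n <= m.
Proof.
  intros [n Hn]. induction n as [n IH] using (well_founded_induction Wf_nat.lt_wf).
  destruct (classic (exists m, m < n /\ P m)) as [[m [Hm Pm]]|Hno].
  - exact (IH m Hm Pm).
  - exists n. split; auto. intros m Pm. destruct (Nat.lt_ge_cases m n); auto.
    exfalso; apply Hno; eauto.
Qed.

Section Comb.
Variables (A : Type) (le : A -> A -> Prop) (HA : ProIndex le).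

Lemma ub_list : forall l : list A, exists w, forall x, In x l -> le x w.
Proof.
  induction l as [|a l IH].
  - destruct (pi_inhabited _ _ HA) as [u _]. exists u. intros x [].
  - destruct IH as [w Hw]. destruct (pi_directed _ _ HA a w) as [z [H1 H2]].
    exists z. intros x [<-|Hx]; auto. eapply (pi_trans _ _ HA); eauto.
Qed.

Lemma ub_fin_up (I : Type) (l : list I) (Q : I -> A -> Prop) :
  (forall i a w, Q i a -> le a w -> Q i w) ->
  (forall i, In i l -> exists a, Q i a) -> exists w, forall i, In i l -> Q i w.
Proof.
  intros Hup. induction l as [|i l IH]; intros H.
  - destruct (pi_inhabited _ _ HA) as [u _]. exists u. intros x [].
  - destruct IH as [w Hw]. { intros j Hj. apply H. right; auto. }
    destruct (H i (or_introl eq_refl)) as [a Ha].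
    destruct (pi_directed _ _ HA a w) as [z [H1 H2]].
    exists z. intros j [<-|Hj]; eauto.
Qed.

Lemma chain_le (f : nat -> A) n :
  (forall i, i < n -> le (f i) (f (S i)) /\ f i <> f (S i)) ->
  forall i j, i <= j -> j <= n -> le (f i) (f j).
Proof.
  intros Hf i j Hij. induction Hij; intros Hn.
  - apply (pi_refl _ _ HA).
  - eapply (pi_trans _ _ HA). apply IHHij; lia. apply Hf; lia.
Qed.

Lemma strict_above (a : A) : exists w, le a w /\ a <> w.
Proof.
  destruct (pi_cofinite _ _ HA a) as [l Hl].
  destruct (pi_infheight _ _ HA (length l)) as [f Hf].
  destruct (pi_directed _ _ HA a (f (length l))) as [z [Ha Hz]].
  exists z; split; auto. intro E; subst z.
  set (n := length l) in *.
  assert (Hd : forall i j, i < j -> j <= n -> f i <> f j).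
  { intros i j Hij Hj E.
    assert (H1 : le (f (S i)) (f j)) by (apply (chain_le f n Hf); lia).
    rewrite <- E in H1.
    apply (proj2 (Hf i ltac:(lia))).
    apply (pi_antisym _ _ HA); auto. apply Hf; lia. }
  assert (ND : forall m k, k + m <= S n -> NoDup (map f (seq k m))).
  { induction m; intros k Hk; simpl. constructor. constructor.
    - intros Hin. apply in_map_iff in Hin. destruct Hin as [x [Ex Hx]].
      apply in_seq in Hx. apply (Hd k x); [lia|lia|auto].
    - apply IHm; lia. }
  assert (Inc : incl (map f (seq 0 (S n))) l).
  { intros x Hx. apply in_map_iff in Hx. destruct Hx as [i [<- Hi]].
    apply in_seq in Hi. apply Hl. eapply (pi_trans _ _ HA); [|exact Hz].
    apply (chain_le f n Hf); lia. }
  pose proof (NoDup_incl_length (ND (S n) 0 ltac:(lia)) Inc) as Hlen.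
  rewrite length_map, length_seq in Hlen. unfold n in Hlen. lia.
Qed.

Lemma strict_ub_list l : exists w, forall x, In x l -> le x w /\ x <> w.
Proof.
  destruct (ub_list l) as [u Hu]. destruct (strict_above u) as [w [H1 H2]].
  exists w. intros x Hx. split. eapply (pi_trans _ _ HA); eauto.
  intros ->. apply H2. apply (pi_antisym _ _ HA); auto.
Qed.

Variables (B : Type) (leB : B -> B -> Prop) (HB : ProIndex leB).

Lemma depth_exists : exists n : B -> nat, forall b b', leB b' b -> b' <> b -> n b' < n b.
Proof.
  set (P := fun b k => exists l : list B, length l = k /\ forall v, leB v b -> In v l).
  assert (Hm : forall b, exists k, P b k /\ forall m, P b m -> k <= m).
  { intros b. apply min_nat. destruct (pi_cofinite _ _ HB b) as [l Hl]. exists (length l), l; auto. }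
  destruct (dchoice B (fun _ => nat) _ Hm) as [n Hn]. exists n.
  intros b b' H Hne. destruct (Hn b) as [[l [Hl Hcov]] _].
  destruct (in_split b l (Hcov b (pi_refl _ _ HB b))) as [l1 [l2 E]].
  destruct (Hn b') as [_ Hmin].
  assert (P b' (length (l1 ++ l2))).
  { exists (l1 ++ l2); split; auto. intros v Hv.
    assert (Hvb : leB v b) by (eapply (pi_trans _ _ HB); eauto).
    pose proof (Hcov v Hvb) as Hin. rewrite E in Hin.
    apply in_app_or in Hin. apply in_or_app. destruct Hin as [?|[<-|?]]; auto.
    exfalso. apply Hne. apply (pi_antisym _ _ HB); auto. }
  pose proof (Hmin _ H0). subst l. rewrite length_app in *. simpl in Hl. lia.
Qed.

Lemma strict_mono_above (g : B -> A) : exists al : B -> A,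
  (forall b, le (g b) (al b)) /\
  (forall b b', leB b' b -> le (al b') (al b)) /\
  (forall b b', leB b' b -> b' <> b -> al b' <> al b).
Proof.
  assert (Hstep : forall (fb : (B -> A) * B), exists w,
     forall v, leB v (snd fb) -> le (fst fb v) w /\ fst fb v <> w).
  { intros [f b]. simpl. destruct (pi_cofinite _ _ HB b) as [l Hl].
    destruct (strict_ub_list (map f l)) as [w Hw]. exists w. intros v Hv.
    apply Hw. apply in_map; auto. }
  destruct (dchoice _ (fun _ => A) _ Hstep) as [step Hs].
  destruct depth_exists as [n Hn].
  set (beta := fix beta k := match k with 0 => g | S k => fun b => step (beta k, b) end).
  assert (Hinc : forall k b, le (beta k b) (beta (S k) b)).
  { intros k b. apply (Hs (beta k, b)). apply (pi_refl _ _ HB). }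
  assert (Hmon : forall k m b, k <= m -> le (beta k b) (beta m b)).
  { intros k m b Hkm. induction Hkm. apply (pi_refl _ _ HA).
    eapply (pi_trans _ _ HA); eauto. }
  assert (Hstr : forall b b', leB b' b -> b' <> b ->
     le (beta (n b') b') (beta (n b) b) /\ beta (n b') b' <> beta (S (n b')) b /\
     le (beta (S (n b')) b) (beta (n b) b)).
  { intros b b' H Hne. pose proof (Hn b b' H Hne).
    destruct (Hs (beta (n b'), b) b' H) as [H1 H2]. simpl in H1, H2.
    split; [|split].
    + eapply (pi_trans _ _ HA). exact H1. exact (Hmon (S (n b')) (n b) b ltac:(lia)).
    + exact H2.
    + exact (Hmon (S (n b')) (n b) b ltac:(lia)). }
  exists (fun b => beta (n b) b). split; [|split].
  - intros b. apply (Hmon 0). lia.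
  - intros b b' H. destruct (classic (b' = b)) as [->|Hne].
    apply (pi_refl _ _ HA). apply (Hstr b b' H Hne).
  - intros b b' H Hne E. destruct (Hstr b b' H Hne) as [_ [H2 H3]].
    apply H2. apply (pi_antisym _ _ HA).
    + destruct (Hs (beta (n b'), b) b' H); auto.
    + rewrite E; auto.
Qed.
End Comb.

Lemma ub_all (A : Type) (le : A -> A -> Prop) (HA : ProIndex le)
  (I : Type) (lI : list I) (R : I -> I -> Prop) (Hcov : forall i, exists g, In g lI /\ R i g)
  (Q : I -> A -> Prop) :
  (forall i a w, Q i a -> le a w -> Q i w) ->
  (forall i g w, R i g -> Q g w -> Q i w) ->
  (forall i, exists a, Q i a) -> exists w, forall i, Q i w.
Proof.
  intros Hup Hinv H. destruct (ub_fin_up A le HA I lI Q Hup (fun i _ => H i)) as [w Hw].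
  exists w. intros i. destruct (Hcov i) as [g [Hg Rg]]. eauto.
Qed.

Lemma up2 (A : Type) (le : A -> A -> Prop) (HA : ProIndex le) (Q1 Q2 : A -> Prop) :
  (forall a w, Q1 a -> le a w -> Q1 w) -> (forall a w, Q2 a -> le a w -> Q2 w) ->
  (exists a, Q1 a) -> (exists a, Q2 a) -> exists w, Q1 w /\ Q2 w.
Proof.
  intros H1 H2 [a Ha] [b Hb]. destruct (pi_directed _ _ HA a b) as [w [L1 L2]]. eauto.
Qed.


Set Default Proof Using "All".
Section S.
Variables (C : Cat) (HC : IsCat C).

#[local] Instance heq_Equiv (a b : ob C) : Equivalence (@heq C a b).
Proof. split; red; intros. apply (heq_refl HC). apply (heq_sym HC); auto. eapply (heq_trans HC); eauto. Qed.
#[local] Instance cmp_Proper (a b c : ob C) : Proper (heq ==> heq ==> heq) (@cmp C a b c).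
Proof. intros f f' Hf g g' Hg. apply (cmp_cong HC); auto. Qed.

Lemma lim_unique (J : Cat) (F : Fun J C) c p (Hl : IsLimit F c p) c' (x y : hom c' c) :
  (forall j, heq (cmp (p j) x) (cmp (p j) y)) -> heq x y.
Proof.
  intros Hxy. destruct Hl as [Hcone Hu].
  destruct (Hu c' (fun j => cmp (p j) y)) as [u [_ Hu']].
  { intros j k f. rewrite (cmp_assoc HC). rewrite Hcone. reflexivity. }
  rewrite (Hu' x Hxy). symmetry. apply Hu'. intros; reflexivity.
Qed.

Lemma colim_unique (J : Cat) (F : Fun J C) c q (Hl : IsColimit F c q) c' (x y : hom c c') :
  (forall j, heq (cmp x (q j)) (cmp y (q j))) -> heq x y.
Proof.
  intros Hxy. destruct Hl as [Hcone Hu].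
  destruct (Hu c' (fun j => cmp y (q j))) as [u [_ Hu']].
  { intros j k f. rewrite <- (cmp_assoc HC). rewrite Hcone. reflexivity. }
  rewrite (Hu' x Hxy). symmetry. apply Hu'. intros; reflexivity.
Qed.

Definition Funct (T : Type) (le : T -> T -> Prop) (o : T -> ob C)
  (m : forall u v, le v u -> hom (o u) (o v)) : Prop :=
  ProIndex le /\ (forall u (H : le u u), heq (m u u H) (cid _)) /\
  (forall u v w (H1 : le v u) (H2 : le w v) (H3 : le w u),
      heq (m u w H3) (cmp (m v w H2) (m u v H1))).

Section F.
Variables (T : Type) (le : T -> T -> Prop) (o : T -> ob C)
  (m : forall u v, le v u -> hom (o u) (o v)) (HF : Funct T le o m).

Lemma F_id u (H : le u u) : heq (m u u H) (cid _).
Proof. apply (proj1 (proj2 HF)). Qed.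

Lemma F_irr u v (H H' : le v u) : heq (m u v H) (m u v H').
Proof.
  destruct HF as [HA [Hid Hc]].
  rewrite (Hc u u v (pi_refl _ _ HA u) H H'). rewrite Hid. symmetry; apply (cid_r HC).
Qed.

Lemma F_merge u v w (H1 : le v u) (H2 : le w v) :
  heq (cmp (m v w H2) (m u v H1)) (m u w (pi_trans _ _ (proj1 HF) _ _ _ H2 H1)).
Proof. symmetry. apply (proj2 (proj2 HF)). Qed.

Lemma F_split u v w (H1 : le v u) (H2 : le w v) (H3 : le w u) :
  heq (m u w H3) (cmp (m v w H2) (m u v H1)).
Proof. apply (proj2 (proj2 HF)). Qed.
End F.

Lemma proobj_funct (P : ProObj C) : IsProObj P -> Funct _ (ple P) (pF P) (@pFm C P).
Proof. intro H; exact H. Qed.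

Definition Rrel (F G : ProObj C) (f g : ProHom F G) : Prop :=
  forall b, exists a (H1 : ple F (pal f b) a) (H2 : ple F (pal g b) a),
     heq (cmp (pphi f b) (pFm F H1)) (cmp (pphi g b) (pFm F H2)).

Lemma proeq_R (F G : ProObj C) (HF : IsProObj F) (f g : ProHom F G) :
  ProEq f g -> Rrel F G f g.
Proof.
  pose proof (proobj_funct F HF) as FF. destruct HF as [HA _].
  induction 1 as [f g [Hle Hphi]| f | f g _ IH | f g h _ IH1 _ IH2]; intros b.
  - exists (pal f b), (pi_refl _ _ HA _), (Hle b).
    rewrite (F_id _ _ _ _ FF). rewrite (cid_r HC). apply Hphi.
  - exists (pal f b), (pi_refl _ _ HA _), (pi_refl _ _ HA _). reflexivity.
  - destruct (IH b) as [a [H1 [H2 E]]]. exists a, H2, H1. symmetry; exact E.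
  - destruct (IH1 b) as [a1 [H1 [H2 E1]]]. destruct (IH2 b) as [a2 [K1 [K2 E2]]].
    destruct (pi_directed _ _ HA a1 a2) as [a [L1 L2]].
    exists a, (pi_trans _ _ HA _ _ _ H1 L1), (pi_trans _ _ HA _ _ _ K2 L2).
    rewrite (F_split _ _ _ _ FF _ _ _ L1 H1). rewrite (cmp_assoc HC), E1.
    rewrite <- (cmp_assoc HC), (F_merge _ _ _ _ FF).
    rewrite (F_irr _ _ _ _ FF _ _ _ (pi_trans _ _ HA _ _ _ K1 L2)), (F_split _ _ _ _ FF _ _ _ L2 K1).
    rewrite (cmp_assoc HC), E2. rewrite <- (cmp_assoc HC), (F_merge _ _ _ _ FF).
    apply (cmp_cong HC). reflexivity. apply (F_irr _ _ _ _ FF).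
Qed.
End S.


Set Default Proof Using "All".
Section S2.
Variables (C : Cat) (HC : IsCat C).

#[local] Instance heq_Equiv2 (a b : ob C) : Equivalence (@heq C a b).
Proof. split; red; intros. apply (heq_refl HC). apply (heq_sym HC); auto. eapply (heq_trans HC); eauto. Qed.
#[local] Instance cmp_Proper2 (a b c : ob C) : Proper (heq ==> heq ==> heq) (@cmp C a b c).
Proof. intros f f' Hf g g' Hg. apply (cmp_cong HC); auto. Qed.

Variables (D : Cat) (HD : IsCat D) (HDf : FiniteCat D) (X : ProDiag C D) (HX : IsProDiag X).

Lemma FX d : Funct C _ (dle X) (fun u => fob (dX X u) d) (fun u v H => dXa X H d).
Proof. exact (jD_obj_ok HX d). Qed.

Lemma dX_irr d u v (H H' : dle X v u) : heq (dXa X H d) (dXa X H' d).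
Proof. exact (F_irr C HC _ _ _ _ (FX d) u v H H'). Qed.
Lemma dX_split d u v w (H1 : dle X v u) (H2 : dle X w v) (H3 : dle X w u) :
  heq (dXa X H3 d) (cmp (dXa X H2 d) (dXa X H1 d)).
Proof. exact (F_split C HC _ _ _ _ (FX d) u v w H1 H2 H3). Qed.
Lemma dX_merge d u v w (H1 : dle X v u) (H2 : dle X w v) (H3 : dle X w u) :
  heq (cmp (dXa X H2 d) (dXa X H1 d)) (dXa X H3 d).
Proof. symmetry. apply dX_split. Qed.

Section Lim.
Variables (Lo : dT X -> ob C) (Lm : forall u v, dle X v u -> hom (Lo u) (Lo v))
  (pi : forall u d, hom (Lo u) (fob (dX X u) d))
  (Hl : forall u, IsLimit (dX X u) (Lo u) (pi u))
  (Hc : forall u v (H : dle X v u) d,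
      heq (cmp (dXa X H d) (pi u d)) (cmp (pi v d) (Lm u v H))).

Lemma level_lim_ok : IsProObj (levelObj Lo Lm).
Proof.
  destruct HX as (HA & HF & Hn & Hid & Hcomp).
  split; [exact HA|split].
  - intros u H. cbn. apply (lim_unique C HC _ _ _ _ (Hl u)). intros d.
    rewrite <- Hc, Hid, (cid_l HC), (cid_r HC). reflexivity.
  - intros u v w H1 H2 H3. cbn. apply (lim_unique C HC _ _ _ _ (Hl w)). intros d.
    rewrite <- Hc, (Hcomp u v w H1 H2 H3 d), <- (cmp_assoc HC), Hc, (cmp_assoc HC), Hc.
    rewrite (cmp_assoc HC). reflexivity.
Qed.

Lemma lim_main (HL : IsProObj (levelObj Lo Lm)) :
  @IsLimit D (ProBar C HC) (jD HC HX) (exist _ (levelObj Lo Lm) HL) (@limLeg C D X Lo Lm pi Hc).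
Proof.
  pose proof (proobj_funct C HC _ HL) as FL.
  pose proof HX as (HA & HF & Hn & Hid & Hcomp).
  split.
  - intros j k f. apply rst_step. split.
    + intros b. apply (pi_refl _ _ HA).
    + intros b H. cbn. rewrite (F_id C HC _ _ _ _ FL), (cid_r HC).
      apply (proj1 (Hl b)).
  - intros [P HP] p' Hp'. cbn in p'.
    pose proof (proobj_funct C HC P HP) as FP. pose proof (proj1 HP) as HPA.
    destruct HDf as [[lD HlD] Hrep].
    assert (HR : forall b j k (f : hom j k), exists a (H1 : ple P (pal (p' j) b) a)
       (H2 : ple P (pal (p' k) b) a),
       heq (cmp (cmp (fmap (dX X b) f) (pphi (p' j) b)) (pFm P H1))
           (cmp (pphi (p' k) b) (pFm P H2))).
    { intros b j k f. exact (proeq_R C HC P _ HP _ _ (Hp' j k f) b). }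
    set (Qf := fun b j k (f : hom j k) w => exists a (H1 : ple P (pal (p' j) b) a)
       (H2 : ple P (pal (p' k) b) a), ple P a w /\
       heq (cmp (cmp (fmap (dX X b) f) (pphi (p' j) b)) (pFm P H1))
           (cmp (pphi (p' k) b) (pFm P H2))).
    assert (Qf_up : forall b j k f a w, Qf b j k f a -> ple P a w -> Qf b j k f w).
    { intros b j k f a w [a' [H1 [H2 [L E]]]] L2. exists a', H1, H2. split; auto.
      eapply (pi_trans _ _ HPA); eauto. }
    assert (Hg0 : forall b, exists w, (forall j, ple P (pal (p' j) b) w) /\
                               (forall j k f, Qf b j k f w)).
    { intros b.
      assert (Hjk : forall j k, exists w, forall f, Qf b j k f w).
      { intros j k. destruct (Hrep j k) as [lf Hlf].
        apply (ub_all _ _ HPA _ lf (fun f g => heq f g) Hlf (fun f w => Qf b j k f w)).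
        - intros; eauto.
        - intros f g w Efg [a [H1 [H2 [L E]]]]. exists a, H1, H2. split; auto.
          rewrite <- E. rewrite (fmap_cong _ _ _ (HF b) _ _ _ _ Efg). reflexivity.
        - intros f. destruct (HR b j k f) as [a [H1 [H2 E]]]. exists a, a, H1, H2.
          split; auto. apply (pi_refl _ _ HPA). }
      apply (up2 _ _ HPA).
      - intros a w Ha L j. eapply (pi_trans _ _ HPA); eauto.
      - intros a w Ha L j k f. eauto.
      - apply (ub_all _ _ HPA _ lD eq (fun i => ex_intro _ i (conj (HlD i) eq_refl))
                 (fun j w => ple P (pal (p' j) b) w)).
        + intros j a w Ha L. eapply (pi_trans _ _ HPA); eauto.
        + intros i g w ->; auto.
        + intros j. exists (pal (p' j) b). apply (pi_refl _ _ HPA).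
      - destruct (ub_all _ _ HPA _ lD eq (fun i => ex_intro _ i (conj (HlD i) eq_refl))
                 (fun j w => forall k f, Qf b j k f w)) as [w Hw].
        + intros j a w Ha L k f. eauto.
        + intros i g w ->; auto.
        + intros j. apply (ub_all _ _ HPA _ lD eq (fun i => ex_intro _ i (conj (HlD i) eq_refl))
                 (fun k w => forall f, Qf b j k f w)).
          * intros k a w Ha L f. eauto.
          * intros i g w ->; auto.
          * intros k. apply Hjk.
        + exists w. exact Hw. }
    destruct (dchoice _ (fun _ => pT P) _ Hg0) as [g0 Hg0'].
    destruct (strict_mono_above (pT P) (ple P) HPA (dT X) (dle X) HA g0)
      as [al [Hg [Hmono Hstrict]]].
    assert (Hal : forall b j, ple P (pal (p' j) b) (al b)).
    { intros b j. eapply (pi_trans _ _ HPA). apply (proj1 (Hg0' b)). apply Hg. }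
    set (psi := fun b j => cmp (pphi (p' j) b) (pFm P (Hal b j))).
    assert (Hcone : forall b, IsCone (dX X b) (pF P (al b)) (psi b)).
    { intros b j k f. unfold psi.
      destruct (proj2 (Hg0' b) j k f) as [a [H1 [H2 [L E]]]].
      assert (La : ple P a (al b)) by (eapply (pi_trans _ _ HPA); [exact L| apply Hg]).
      rewrite (F_split C HC _ _ _ _ FP _ _ _ La H1 (Hal b j)).
      rewrite !(cmp_assoc HC), E. rewrite <- (cmp_assoc HC), (F_merge C HC _ _ _ _ FP).
      apply (cmp_cong HC). reflexivity. apply (F_irr C HC _ _ _ _ FP). }
    assert (Hfac : forall b, exists x : hom (pF P (al b)) (Lo b),
               forall j, heq (cmp (pi b j) x) (psi b j)).
    { intros b. destruct (proj2 (Hl b) _ _ (Hcone b)) as [x [Hx _]]. eauto. }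
    destruct (dchoice _ (fun b => hom (pF P (al b)) (Lo b)) _ Hfac) as [phi Hphi].
    assert (Hnat : forall b b' (H : dle X b' b),
      heq (cmp (Lm b b' H) (phi b)) (cmp (phi b') (pFm P (Hmono b b' H)))).
    { intros b b' H. apply (lim_unique C HC _ _ _ _ (Hl b')). intros d.
      transitivity (cmp (dXa X H d) (psi b d)).
      { rewrite (cmp_assoc HC), <- Hc, <- (cmp_assoc HC), Hphi. reflexivity. }
      rewrite (cmp_assoc HC), Hphi. unfold psi.
      pose proof (pnat (p' d) H) as E; cbn in E.
      rewrite (cmp_assoc HC), E. rewrite <- !(cmp_assoc HC).
      rewrite !(F_merge C HC _ _ _ _ FP).
      apply (cmp_cong HC). reflexivity. apply (F_irr C HC _ _ _ _ FP). }
    exists (Build_ProHom C P (levelObj Lo Lm) al Hmono Hstrict phi Hnat). split.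
    + intros j. apply rst_step. split.
      * intros b. exact (Hal b j).
      * intros b H. change (heq (cmp (pi b j) (phi b)) (cmp (pphi (p' j) b) (pFm P H))).
        rewrite Hphi. unfold psi. apply (cmp_cong HC). reflexivity. apply (F_irr C HC _ _ _ _ FP).
    + intros u' Hu'. cbn in u'.
      assert (HR2 : forall b j, exists a (H1 : ple P (pal u' b) a)
         (H2 : ple P (pal (p' j) b) a),
         heq (cmp (cmp (pi b j) (pphi u' b)) (pFm P H1))
             (cmp (pphi (p' j) b) (pFm P H2))).
      { intros b j. exact (proeq_R C HC P _ HP _ _ (Hu' j) b). }
      assert (Hg1 : forall b, exists w, (ple P (al b) w /\ ple P (pal u' b) w) /\
          forall j, exists a (H1 : ple P (pal u' b) a) (H2 : ple P (pal (p' j) b) a),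
            ple P a w /\ heq (cmp (cmp (pi b j) (pphi u' b)) (pFm P H1))
             (cmp (pphi (p' j) b) (pFm P H2))).
      { intros b. apply (up2 _ _ HPA).
        - intros a w [L1 L2] L; split; eapply (pi_trans _ _ HPA); eauto.
        - intros a w Ha L j. destruct (Ha j) as [a' [H1 [H2 [L' E]]]].
          exists a', H1, H2; split; auto. eapply (pi_trans _ _ HPA); eauto.
        - destruct (pi_directed _ _ HPA (al b) (pal u' b)) as [z [L1 L2]]. eauto.
        - apply (ub_all _ _ HPA _ lD eq (fun i => ex_intro _ i (conj (HlD i) eq_refl))
            (fun j w => exists a (H1 : ple P (pal u' b) a) (H2 : ple P (pal (p' j) b) a),
            ple P a w /\ heq (cmp (cmp (pi b j) (pphi u' b)) (pFm P H1))
             (cmp (pphi (p' j) b) (pFm P H2)))).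
          + intros j a w [a' [H1 [H2 [L' E]]]] L.
            exists a', H1, H2; split; auto. eapply (pi_trans _ _ HPA); eauto.
          + intros i g w ->; auto.
          + intros j. destruct (HR2 b j) as [a [H1 [H2 E]]]. exists a, a, H1, H2.
            split; auto. apply (pi_refl _ _ HPA). }
      destruct (dchoice _ (fun _ => pT P) _ Hg1) as [g1 Hg1'].
      destruct (strict_mono_above (pT P) (ple P) HPA (dT X) (dle X) HA g1)
        as [aw [Hgw [Hmw Hsw]]].
      assert (Hwu : forall b, ple P (al b) (aw b)).
      { intros b. eapply (pi_trans _ _ HPA). apply (proj1 (proj1 (Hg1' b))). apply Hgw. }
      assert (Hwu' : forall b, ple P (pal u' b) (aw b)).
      { intros b. eapply (pi_trans _ _ HPA). apply (proj2 (proj1 (Hg1' b))). apply Hgw. }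
      set (phiw := fun b => cmp (phi b) (pFm P (Hwu b))).
      assert (Hnatw : forall b b' (H : dle X b' b),
        heq (cmp (Lm b b' H) (phiw b)) (cmp (phiw b') (pFm P (Hmw b b' H)))).
      { intros b b' H. unfold phiw. rewrite (cmp_assoc HC), Hnat.
        rewrite <- !(cmp_assoc HC). rewrite !(F_merge C HC _ _ _ _ FP).
        apply (cmp_cong HC). reflexivity. apply (F_irr C HC _ _ _ _ FP). }
      set (w := Build_ProHom C P (levelObj Lo Lm) aw Hmw Hsw phiw Hnatw).
      apply (rst_trans _ _ u' w _).
      * apply rst_sym, rst_step. split.
        { intros b. exact (Hwu' b). }
        intros b H. change (heq (phiw b) (cmp (pphi u' b) (pFm P H))).
        apply (lim_unique C HC _ _ _ _ (Hl b)). intros j.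
        assert (Hjw : ple P (pal (p' j) b) (aw b))
          by (eapply (pi_trans _ _ HPA); [apply Hal | apply Hwu]).
        transitivity (cmp (pphi (p' j) b) (pFm P Hjw)).
        { unfold phiw. rewrite (cmp_assoc HC), Hphi. unfold psi.
          rewrite <- (cmp_assoc HC), (F_merge C HC _ _ _ _ FP).
          apply (cmp_cong HC). reflexivity. apply (F_irr C HC _ _ _ _ FP). }
        destruct (proj2 (Hg1' b) j) as [a [H1 [H2 [La E]]]].
        assert (La' : ple P a (aw b)) by (eapply (pi_trans _ _ HPA); [exact La | apply Hgw]).
        change (heq (cmp (pphi (p' j) b) (pFm P Hjw)) (cmp (pi b j) (cmp (pphi u' b) (@pFm C P (aw b) (pal u' b) H)))).
        rewrite (F_split C HC _ _ _ _ FP _ _ _ La' H1 H).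
        rewrite !(cmp_assoc HC), E, <- (cmp_assoc HC), (F_merge C HC _ _ _ _ FP).
        apply (cmp_cong HC). reflexivity. apply (F_irr C HC _ _ _ _ FP).
      * apply rst_step. split.
        { intros b. exact (Hwu b). }
        intros b H. change (heq (phiw b) (cmp (phi b) (pFm P H))). unfold phiw.
        apply (cmp_cong HC). reflexivity. apply (F_irr C HC _ _ _ _ FP).
Qed.
End Lim.

Lemma choice3 (T : Type) (le : T -> T -> Prop) (A : T -> T -> Type)
  (Q : forall u v, le v u -> A u v -> Prop) :
  (forall u v (H : le v u), exists m, Q u v H m) ->
  exists M : forall u v (H : le v u), A u v, forall u v H, Q u v H (M u v H).
Proof.
  intros H.
  destruct (dchoice T (fun u => forall v (H : le v u), A u v)
     (fun u F => forall v H, Q u v H (F v H))) as [M HM]; [|exists M; auto].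
  intros u. destruct (dchoice T (fun v => forall (H : le v u), A u v)
     (fun v F => forall H, Q u v H (F H))) as [M HM]; [|exists M; auto].
  intros v. apply (dchoice (le v u) (fun _ => A u v) (fun H m => Q u v H m)). auto.
Qed.

Lemma lim_exists : HasFiniteLimits C ->
  exists (Lo : dT X -> ob C) (Lm : forall u v, dle X v u -> hom (Lo u) (Lo v))
         (pi : forall u d, hom (Lo u) (fob (dX X u) d)),
    (forall u, IsLimit (dX X u) (Lo u) (pi u)) /\
    (forall u v (H : dle X v u) d,
        heq (cmp (dXa X H d) (pi u d)) (cmp (pi v d) (Lm u v H))).
Proof.
  intros HLim. pose proof HX as (HA & HF & Hn & Hid & Hcomp).
  destruct (dchoice (dT X) (fun u => {c : ob C & forall d, hom c (fob (dX X u) d)})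
     (fun u x => IsLimit (dX X u) (projT1 x) (projT2 x))) as [s Hs].
  { intros u. destruct (HLim D HD HDf (dX X u) (HF u)) as [c [p Hp]].
    exists (existT _ c p). exact Hp. }
  set (Lo := fun u => projT1 (s u)). set (pi := fun u => projT2 (s u)).
  destruct (choice3 (dT X) (dle X) (fun u v => hom (Lo u) (Lo v))
     (fun u v H m => forall d, heq (cmp (pi v d) m) (cmp (dXa X H d) (pi u d))))
     as [Lm HLm].
  { intros u v H. destruct (proj2 (Hs v) (Lo u) (fun d => cmp (dXa X H d) (pi u d)))
      as [m [Hm _]].
    - intros j k f.
      transitivity (cmp (cmp (fmap (dX X v) f) (dXa X H j)) (pi u j)). apply (cmp_assoc HC).
      transitivity (cmp (cmp (dXa X H k) (fmap (dX X u) f)) (pi u j)).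
      apply (cmp_cong HC); [apply Hn | reflexivity].
      transitivity (cmp (dXa X H k) (cmp (fmap (dX X u) f) (pi u j))).
      symmetry; apply (cmp_assoc HC).
      apply (cmp_cong HC); [reflexivity | apply (proj1 (Hs u))].
    - exists m. exact Hm. }
  exists Lo, Lm, pi. split.
  - intros u. exact (Hs u).
  - intros u v H d. symmetry. apply HLm.
Qed.

Lemma colim_exists : HasFiniteColimits C ->
  exists (Lo : dT X -> ob C) (Lm : forall u v, dle X v u -> hom (Lo u) (Lo v))
         (io : forall u d, hom (fob (dX X u) d) (Lo u)),
    (forall u, IsColimit (dX X u) (Lo u) (io u)) /\
    (forall u v (H : dle X v u) d,
        heq (cmp (Lm u v H) (io u d)) (cmp (io v d) (dXa X H d))).
Proof.
  intros HLim. pose proof HX as (HA & HF & Hn & Hid & Hcomp).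
  destruct (dchoice (dT X) (fun u => {c : ob C & forall d, hom (fob (dX X u) d) c})
     (fun u x => IsColimit (dX X u) (projT1 x) (projT2 x))) as [s Hs].
  { intros u. destruct (HLim D HD HDf (dX X u) (HF u)) as [c [p Hp]].
    exists (existT _ c p). exact Hp. }
  set (Lo := fun u => projT1 (s u)). set (io := fun u => projT2 (s u)).
  destruct (choice3 (dT X) (dle X) (fun u v => hom (Lo u) (Lo v))
     (fun u v H m => forall d, heq (cmp m (io u d)) (cmp (io v d) (dXa X H d))))
     as [Lm HLm].
  { intros u v H. destruct (proj2 (Hs u) (Lo v) (fun d => cmp (io v d) (dXa X H d)))
      as [m [Hm _]].
    - intros j k f.
      transitivity (cmp (io v k) (cmp (dXa X H k) (fmap (dX X u) f))). symmetry; apply (cmp_assoc HC).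
      transitivity (cmp (io v k) (cmp (fmap (dX X v) f) (dXa X H j))).
      apply (cmp_cong HC); [reflexivity | symmetry; apply Hn].
      transitivity (cmp (cmp (io v k) (fmap (dX X v) f)) (dXa X H j)).
      apply (cmp_assoc HC).
      apply (cmp_cong HC); [apply (proj1 (Hs v)) | reflexivity].
    - exists m. exact Hm. }
  exists Lo, Lm, io. split.
  - intros u. exact (Hs u).
  - intros u v H d. apply HLm.
Qed.

Section Colim.
Variables (Lo : dT X -> ob C) (Lm : forall u v, dle X v u -> hom (Lo u) (Lo v))
  (io : forall u d, hom (fob (dX X u) d) (Lo u))
  (Hl : forall u, IsColimit (dX X u) (Lo u) (io u))
  (Hc : forall u v (H : dle X v u) d,
      heq (cmp (Lm u v H) (io u d)) (cmp (io v d) (dXa X H d))).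

Lemma level_colim_ok : IsProObj (levelObj Lo Lm).
Proof.
  destruct HX as (HA & HF & Hn & Hid & Hcomp).
  split; [exact HA|split].
  - intros u H. cbn. apply (colim_unique C HC _ _ _ _ (Hl u)). intros d.
    rewrite Hc, Hid, (cid_l HC), (cid_r HC). reflexivity.
  - intros u v w H1 H2 H3. cbn. apply (colim_unique C HC _ _ _ _ (Hl u)). intros d.
    rewrite Hc, (Hcomp u v w H1 H2 H3 d), (cmp_assoc HC), <- Hc, <- (cmp_assoc HC), <- Hc.
    rewrite (cmp_assoc HC). reflexivity.
Qed.

Lemma colim_main (HL : IsProObj (levelObj Lo Lm)) :
  @IsColimit D (ProBar C HC) (jD HC HX) (exist _ (levelObj Lo Lm) HL) (@colimLeg C D X Lo Lm io Hc).
Proof.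
  assert (FLm : Funct C _ (dle X) Lo Lm) by exact HL.
  pose proof HX as (HA & HF & Hn & Hid & Hcomp).
  split.
  - intros j k f. apply rst_step. split.
    + intros b. apply (pi_refl _ _ HA).
    + intros b H. cbn. rewrite Hid, (cid_r HC).
      apply (proj1 (Hl b)).
  - intros [P HP] q' Hq'. cbn in q'.
    pose proof (proobj_funct C HC P HP) as FP. pose proof (proj1 HP) as HPA.
    destruct HDf as [[lD HlD] Hrep].
    assert (HR : forall b j k (f : hom j k), exists a (H1 : dle X (pal (q' k) b) a)
       (H2 : dle X (pal (q' j) b) a),
       heq (cmp (cmp (pphi (q' k) b) (fmap (dX X (pal (q' k) b)) f)) (dXa X H1 j))
           (cmp (pphi (q' j) b) (dXa X H2 j))).
    { intros b j k f. exact (proeq_R C HC (jD_obj X j) P (jD_obj_ok HX j) _ _ (Hq' j k f) b). }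
    set (Qf := fun b j k (f : hom j k) w => exists a (H1 : dle X (pal (q' k) b) a)
       (H2 : dle X (pal (q' j) b) a), dle X a w /\
       heq (cmp (cmp (pphi (q' k) b) (fmap (dX X (pal (q' k) b)) f)) (dXa X H1 j))
           (cmp (pphi (q' j) b) (dXa X H2 j))).
    assert (Qf_up : forall b j k f a w, Qf b j k f a -> dle X a w -> Qf b j k f w).
    { intros b j k f a w [a' [H1 [H2 [L E]]]] L2. exists a', H1, H2. split; auto.
      eapply (pi_trans _ _ HA); eauto. }
    assert (Hg0 : forall b, exists w, (forall j, dle X (pal (q' j) b) w) /\
                               (forall j k f, Qf b j k f w)).
    { intros b.
      assert (Hjk : forall j k, exists w, forall f, Qf b j k f w).
      { intros j k. destruct (Hrep j k) as [lf Hlf].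
        apply (ub_all _ _ HA _ lf (fun f g => heq f g) Hlf (fun f w => Qf b j k f w)).
        - intros; eauto.
        - intros f g w Efg [a [H1 [H2 [L E]]]]. exists a, H1, H2. split; auto.
          rewrite <- E. rewrite (fmap_cong _ _ _ (HF (pal (q' k) b)) _ _ _ _ Efg). reflexivity.
        - intros f. destruct (HR b j k f) as [a [H1 [H2 E]]]. exists a, a, H1, H2.
          split; auto. apply (pi_refl _ _ HA). }
      apply (up2 _ _ HA).
      - intros a w Ha L j. eapply (pi_trans _ _ HA); eauto.
      - intros a w Ha L j k f. eauto.
      - apply (ub_all _ _ HA _ lD eq (fun i => ex_intro _ i (conj (HlD i) eq_refl))
                 (fun j w => dle X (pal (q' j) b) w)).
        + intros j a w Ha L. eapply (pi_trans _ _ HA); eauto.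
        + intros i g w ->; auto.
        + intros j. exists (pal (q' j) b). apply (pi_refl _ _ HA).
      - destruct (ub_all _ _ HA _ lD eq (fun i => ex_intro _ i (conj (HlD i) eq_refl))
                 (fun j w => forall k f, Qf b j k f w)) as [w Hw].
        + intros j a w Ha L k f. eauto.
        + intros i g w ->; auto.
        + intros j. apply (ub_all _ _ HA _ lD eq (fun i => ex_intro _ i (conj (HlD i) eq_refl))
                 (fun k w => forall f, Qf b j k f w)).
          * intros k a w Ha L f. eauto.
          * intros i g w ->; auto.
          * intros k. apply Hjk.
        + exists w. exact Hw. }
    destruct (dchoice _ (fun _ => dT X) _ Hg0) as [g0 Hg0'].
    destruct (strict_mono_above (dT X) (dle X) HA (pT P) (ple P) HPA g0)
      as [al [Hg [Hmono Hstrict]]].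
    assert (Hal : forall b j, dle X (pal (q' j) b) (al b)).
    { intros b j. eapply (pi_trans _ _ HA). apply (proj1 (Hg0' b)). apply Hg. }
    set (psi := fun b j => cmp (pphi (q' j) b) (dXa X (Hal b j) j)).
    assert (Hcone : forall b, IsCocone (dX X (al b)) (pF P b) (psi b)).
    { intros b j k f. unfold psi.
      destruct (proj2 (Hg0' b) j k f) as [a [H1 [H2 [L E]]]].
      assert (La : dle X a (al b)) by (eapply (pi_trans _ _ HA); [exact L| apply Hg]).
      transitivity (cmp (pphi (q' k) b) (cmp (fmap (dX X (pal (q' k) b)) f) (dXa X (Hal b k) j))).
      { rewrite <- (cmp_assoc HC). apply (cmp_cong HC). reflexivity. symmetry. apply Hn. }
      rewrite (dX_split j _ _ _ La H1 (Hal b k)).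
      rewrite !(cmp_assoc HC), E. rewrite <- (cmp_assoc HC), (dX_merge j _ _ _ La H2 (Hal b j)).
      reflexivity. }
    assert (Hfac : forall b, exists x : hom (Lo (al b)) (pF P b),
               forall j, heq (cmp x (io (al b) j)) (psi b j)).
    { intros b. destruct (proj2 (Hl (al b)) _ _ (Hcone b)) as [x [Hx _]]. eauto. }
    destruct (dchoice _ (fun b => hom (Lo (al b)) (pF P b)) _ Hfac) as [phi Hphi].
    assert (Hnat : forall b b' (H : ple P b' b),
      heq (cmp (pFm P H) (phi b)) (cmp (phi b') (Lm (al b) (al b') (Hmono b b' H)))).
    { intros b b' H. apply (colim_unique C HC _ _ _ _ (Hl (al b))). intros d.
      assert (Hm : dle X (pal (q' d) b') (al b))
        by (eapply (pi_trans _ _ HA); [apply Hal | apply Hmono; exact H]).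
      transitivity (cmp (pphi (q' d) b') (dXa X Hm d)).
      { rewrite <- (cmp_assoc HC), Hphi. unfold psi.
        pose proof (pnat (q' d) H) as E; cbn in E.
        rewrite (cmp_assoc HC), E, <- (cmp_assoc HC).
        apply (cmp_cong HC); [reflexivity| first [apply dX_merge | symmetry; apply dX_merge]]. }
      rewrite <- (cmp_assoc HC), Hc, (cmp_assoc HC), Hphi. unfold psi.
      rewrite <- (cmp_assoc HC).
        apply (cmp_cong HC); [reflexivity| first [apply dX_merge | symmetry; apply dX_merge]]. }
    exists (Build_ProHom C (levelObj Lo Lm) P al Hmono Hstrict phi Hnat). split.
    + intros j. apply rst_step. split.
      * intros b. exact (Hal b j).
      * intros b H.
        change (heq (cmp (phi b) (io (al b) j))
                    (cmp (pphi (q' j) b) (@dXa C D X (al b) (pal (q' j) b) H j))).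
        rewrite Hphi. unfold psi. apply (cmp_cong HC). reflexivity. apply dX_irr.
    + intros u' Hu'. cbn in u'.
      assert (HR2 : forall b j, exists a (H1 : dle X (pal u' b) a)
         (H2 : dle X (pal (q' j) b) a),
         heq (cmp (cmp (pphi u' b) (io (pal u' b) j)) (dXa X H1 j))
             (cmp (pphi (q' j) b) (dXa X H2 j))).
      { intros b j. exact (proeq_R C HC (jD_obj X j) P (jD_obj_ok HX j) _ _ (Hu' j) b). }
      assert (Hg1 : forall b, exists w, (dle X (al b) w /\ dle X (pal u' b) w) /\
          forall j, exists a (H1 : dle X (pal u' b) a) (H2 : dle X (pal (q' j) b) a),
            dle X a w /\ heq (cmp (cmp (pphi u' b) (io (pal u' b) j)) (dXa X H1 j))
             (cmp (pphi (q' j) b) (dXa X H2 j))).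
      { intros b. apply (up2 _ _ HA).
        - intros a w [L1 L2] L; split; eapply (pi_trans _ _ HA); eauto.
        - intros a w Ha L j. destruct (Ha j) as [a' [H1 [H2 [L' E]]]].
          exists a', H1, H2; split; auto. eapply (pi_trans _ _ HA); eauto.
        - destruct (pi_directed _ _ HA (al b) (pal u' b)) as [z [L1 L2]]. eauto.
        - apply (ub_all _ _ HA _ lD eq (fun i => ex_intro _ i (conj (HlD i) eq_refl))
            (fun j w => exists a (H1 : dle X (pal u' b) a) (H2 : dle X (pal (q' j) b) a),
            dle X a w /\ heq (cmp (cmp (pphi u' b) (io (pal u' b) j)) (dXa X H1 j))
             (cmp (pphi (q' j) b) (dXa X H2 j)))).
          + intros j a w [a' [H1 [H2 [L' E]]]] L.
            exists a', H1, H2; split; auto. eapply (pi_trans _ _ HA); eauto.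
          + intros i g w ->; auto.
          + intros j. destruct (HR2 b j) as [a [H1 [H2 E]]]. exists a, a, H1, H2.
            split; auto. apply (pi_refl _ _ HA). }
      destruct (dchoice _ (fun _ => dT X) _ Hg1) as [g1 Hg1'].
      destruct (strict_mono_above (dT X) (dle X) HA (pT P) (ple P) HPA g1)
        as [aw [Hgw [Hmw Hsw]]].
      assert (Hwu : forall b, dle X (al b) (aw b)).
      { intros b. eapply (pi_trans _ _ HA). apply (proj1 (proj1 (Hg1' b))). apply Hgw. }
      assert (Hwu' : forall b, dle X (pal u' b) (aw b)).
      { intros b. eapply (pi_trans _ _ HA). apply (proj2 (proj1 (Hg1' b))). apply Hgw. }
      set (phiw := fun b => cmp (phi b) (Lm (aw b) (al b) (Hwu b))).
      assert (Hnatw : forall b b' (H : ple P b' b),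
        heq (cmp (pFm P H) (phiw b)) (cmp (phiw b') (Lm (aw b) (aw b') (Hmw b b' H)))).
      { intros b b' H. unfold phiw. rewrite (cmp_assoc HC), Hnat.
        rewrite <- !(cmp_assoc HC). rewrite !(F_merge C HC _ _ _ _ FLm).
        apply (cmp_cong HC). reflexivity. apply (F_irr C HC _ _ _ _ FLm). }
      set (w := Build_ProHom C (levelObj Lo Lm) P aw Hmw Hsw phiw Hnatw).
      apply (rst_trans _ _ u' w _).
      * apply rst_sym, rst_step. split.
        { intros b. exact (Hwu' b). }
        intros b H. change (heq (phiw b) (cmp (pphi u' b) (Lm (aw b) (pal u' b) H))).
        apply (colim_unique C HC _ _ _ _ (Hl (aw b))). intros j.
        assert (Hjw : dle X (pal (q' j) b) (aw b))
          by (eapply (pi_trans _ _ HA); [apply Hal | apply Hwu]).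
        transitivity (cmp (pphi (q' j) b) (dXa X Hjw j)).
        { unfold phiw. rewrite <- (cmp_assoc HC), Hc, (cmp_assoc HC), Hphi. unfold psi.
          rewrite <- (cmp_assoc HC).
        apply (cmp_cong HC); [reflexivity| first [apply dX_merge | symmetry; apply dX_merge]]. }
        destruct (proj2 (Hg1' b) j) as [a [H1 [H2 [La E]]]].
        assert (La' : dle X a (aw b)) by (eapply (pi_trans _ _ HA); [exact La | apply Hgw]).
        symmetry.
        rewrite <- (cmp_assoc HC), Hc, (dX_split j _ _ _ La' H1 H).
        rewrite !(cmp_assoc HC), E, <- (cmp_assoc HC).
        apply (cmp_cong HC); [reflexivity| first [apply dX_merge | symmetry; apply dX_merge]].
      * apply rst_step. split.
        { intros b. exact (Hwu b). }
        intros b H. change (heq (phiw b) (cmp (phi b) (Lm (aw b) (al b) H))). unfold phiw.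
        apply (cmp_cong HC). reflexivity. apply (F_irr C HC _ _ _ _ FLm).
Qed.
End Colim.
End S2.

Theorem corollary3p19 :
  forall (C : Cat) (HC : IsCat C) (D : Cat) (HD : IsCat D) (HDf : FiniteCat D)
    (X : ProDiag C D) (HX : IsProDiag X),
  (* 1. limits *)
  (HasFiniteLimits C ->
     (exists (Lo : dT X -> ob C) (Lm : forall u v, dle X v u -> hom (Lo u) (Lo v))
             (pi : forall u d, hom (Lo u) (fob (dX X u) d)),
        (forall u, IsLimit (dX X u) (Lo u) (pi u)) /\
        (forall u v (H : dle X v u) d,
            heq (cmp (dXa X H d) (pi u d)) (cmp (pi v d) (Lm u v H)))) /\
     (forall (Lo : dT X -> ob C) (Lm : forall u v, dle X v u -> hom (Lo u) (Lo v))
             (pi : forall u d, hom (Lo u) (fob (dX X u) d))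
             (Hl : forall u, IsLimit (dX X u) (Lo u) (pi u))
             (Hc : forall u v (H : dle X v u) d,
                 heq (cmp (dXa X H d) (pi u d)) (cmp (pi v d) (Lm u v H))),
        exists HL : IsProObj (levelObj Lo Lm),
          @IsLimit D (ProBar C HC) (jD HC HX) (exist _ (levelObj Lo Lm) HL)
            (@limLeg C D X Lo Lm pi Hc))) /\
  (* 2. colimits *)
  (HasFiniteColimits C ->
     (exists (Lo : dT X -> ob C) (Lm : forall u v, dle X v u -> hom (Lo u) (Lo v))
             (io : forall u d, hom (fob (dX X u) d) (Lo u)),
        (forall u, IsColimit (dX X u) (Lo u) (io u)) /\
        (forall u v (H : dle X v u) d,
            heq (cmp (Lm u v H) (io u d)) (cmp (io v d) (dXa X H d)))) /\
     (forall (Lo : dT X -> ob C) (Lm : forall u v, dle X v u -> hom (Lo u) (Lo v))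
             (io : forall u d, hom (fob (dX X u) d) (Lo u))
             (Hl : forall u, IsColimit (dX X u) (Lo u) (io u))
             (Hc : forall u v (H : dle X v u) d,
                 heq (cmp (Lm u v H) (io u d)) (cmp (io v d) (dXa X H d))),
        exists HL : IsProObj (levelObj Lo Lm),
          @IsColimit D (ProBar C HC) (jD HC HX) (exist _ (levelObj Lo Lm) HL)
            (@colimLeg C D X Lo Lm io Hc))).

Proof.
  intros C HC D HD HDf X HX. split.
  - intros HLim. split.
    + exact (lim_exists C HC D HD HDf X HX HLim).
    + intros Lo Lm pi Hl Hc.
      exists (level_lim_ok C HC D HD HDf X HX Lo Lm pi Hl Hc).
      exact (lim_main C HC D HD HDf X HX Lo Lm pi Hl Hc _).
  - intros HLim. split.
    + exact (colim_exists C HC D HD HDf X HX HLim).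
    + intros Lo Lm io Hl Hc.
      exists (level_colim_ok C HC D HD HDf X HX Lo Lm io Hl Hc).
      exact (colim_main C HC D HD HDf X HX Lo Lm io Hl Hc _).
Qed.
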